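(* Let $S$ be a nonempty set of graphs on $\Pi$. Then $\mathrm{eqdom}(S)$-set agreement is solvable in one round on the closed-above model generated by $\mathrm{Sym}(S)$.
   Context: Fix a set of $n$ processes $\Pi=\{p_1,\dots,p_n\}$. A graph is a directed graph with vertex set $\Pi$; every graph is assumed to contain all self-loops $(p,p)$. For a graph $G$ and $p\in\Pi$, $Out_G(p)=\{q:(p,q)\in E(G)\}$ and $In_G(p)=\{q:(q,p)\in E(G)\}$; for $P\subseteq\Pi$, $Out_G(P)=\bigcup_{p\in P}Out_G(p)$. Computation proceeds in failure-free, communication-closed rounds: in each round $r$ a graph $G_r$ is chosen and each process $p$ receives in round $r$ exactly the round-$r$ messages of the processes in $In_{G_r}(p)$. A communication model is a set of infinite sequences of graphs; an execution is allowed iff its sequence of round graphs belongs to the model. For a graph $G$, $\uparrow G=\{H: E(H)\supseteq E(G)\}$. The closed-above model generated by a set $S$ of graphs is $(\bigcup_{G\in S}\uparrow G)^\omega$. For a set $S$ of graphs, $\mathrm{Sym}(S)=\{\pi(G): G\in S,\ \pi:\Pi\to\Pi \text{ a permutation}\}$, where $\pi(G)$ has edges $\{(\pi(u),\pi(v)):(u,v)\in E(G)\}$. In $k$-set agreement each process starts with an input from a totally ordered set $V_{in}$ and must decide a value so that every decided value is the input of some process and at most $k$ distinct values are decided; it is solvable in $r$ rounds on a model if some algorithm guarantees this, with all processes deciding after $r$ rounds, in every allowed execution and for every input assignment. For a graph $G$, $\mathrm{eqdom}(G)=\min\{i\in[1,n]: \forall P\subseteq\Pi,\ |P|=i\Rightarrow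 Out_G(P)=\Pi\}$, and $\mathrm{eqdom}(S)=\max_{G\in S}\mathrm{eqdom}(G)$. *)

(* Defs.v *)
From HB Require Import structures.
From mathcomp Require Import all_boot all_order all_fingroup.
Set Implicit Arguments. Unset Strict Implicit. Unset Printing Implicit Defensive.

(* Processes Pi = 'I_n; a graph is a set of directed edges (p,q). *)
Definition graph (n : nat) := {set 'I_n * 'I_n}.

Definition is_graph n (G : graph n) : bool := [forall p, (p, p) \in G].

Definition Out n (G : graph n) (P : {set 'I_n}) : {set 'I_n} :=
  [set q | [exists p in P, (p, q) \in G]].

Definition In n (G : graph n) (p : 'I_n) : {set 'I_n} :=
  [set q | (q, p) \in G].

Definition perm_graph n (s : {perm 'I_n}) (G : graph n) : graph n :=
  [set (s e.1, s e.2) | e in G].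

Definition SymG n (S : {set graph n}) : {set graph n} :=
  [set perm_graph s G | s in [set: {perm 'I_n}], G in S].

(* the closed-above model generated by S: sequences of round graphs
   (index r : nat is round r+1) each containing some graph of S *)
Definition closed_above_model n (S : {set graph n}) : (nat -> graph n) -> Prop :=
  fun gs => forall r, exists2 G, G \in S & G \subset gs r.

Definition dominates_at n (G : graph n) (i : nat) : bool :=
  [forall P : {set 'I_n}, (#|P| == i) ==> (Out G P == [set: 'I_n])].

Definition eqdomG n (G : graph n) : nat :=
  \big[minn/n]_(1 <= i < n.+1 | dominates_at G i) i.

Definition eqdom n (S : {set graph n}) : nat := \max_(G in S) eqdomG G.

(* A one-round algorithm: each process p sends the message send p (x p),
   receives the round-1 messages of the processes in In_{G_1}(p), and
   decides dec p (x p) rcv, where rcv q = Some msg iff q is an in-neighbour. *)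
Definition one_round_decision n (V Msg : Type) (send : 'I_n -> V -> Msg)
  (dec : 'I_n -> V -> ('I_n -> option Msg) -> V) (G1 : graph n) (x : 'I_n -> V)
  (p : 'I_n) : V :=
  dec p (x p) (fun q => if q \in In G1 p then Some (send q (x q)) else None).

Definition set_agreement_solvable_one_round n (V : eqType) (k : nat)
  (M : (nat -> graph n) -> Prop) : Prop :=
  exists (Msg : Type) (send : 'I_n -> V -> Msg)
         (dec : 'I_n -> V -> ('I_n -> option Msg) -> V),
    forall gs : nat -> graph n, M gs -> forall x : 'I_n -> V,
      (forall p, exists q, one_round_decision send dec (gs 0) x p = x q) /\
      size (undup [seq one_round_decision send dec (gs 0) x p | p <- enum 'I_n]) <= k.

(* Main.v *)
Require Import Defs.
From HB Require Import structures.
From mathcomp Require Import all_boot all_order all_fingroup.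
Set Implicit Arguments. Unset Strict Implicit. Unset Printing Implicit Defensive.
Import Order.TTheory.

Lemma eqdomG_spec n (G : graph n) : is_graph G ->
  eqdomG G <= n /\ forall P : {set 'I_n}, #|P| = eqdomG G -> Out G P = setT.
Proof.
move=> hG; rewrite /eqdomG.
apply: (big_rec (fun v => v <= n /\ forall P : {set 'I_n}, #|P| = v -> Out G P = setT)).
- split => // P hP.
  have -> : P = setT.
    by apply/eqP; rewrite eqEcard subsetT cardsT card_ord hP leqnn.
  apply/setP => q; rewrite !inE; apply/existsP; exists q.
  by rewrite in_setT (forallP hG q).
- move=> i v hdom [hv hP]; cbv beta; case: (leqP i v) => hiv.
  + split; first exact: leq_trans hiv hv.
    move=> P hPi; move/forallP: hdom => /(_ P) /implyP.
    by rewrite hPi eqxx => /(_ isT) /eqP.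
  + by [].
Qed.

Definition decf (T : finType) d (V : orderType d) (v : V) (rcv : T -> option V) :=
  foldr (fun q acc => if rcv q is Some w then Order.min w acc else acc) v (enum T).

Lemma fold_spec (T : eqType) d (V : orderType d) (v : V) (rcv : T -> option V)
  (s : seq T) :
  let r := foldr (fun q acc => if rcv q is Some w then Order.min w acc else acc) v s in
  (r = v \/ exists2 q, q \in s & rcv q = Some r) /\ (r <= v)%O /\
  (forall q w, q \in s -> rcv q = Some w -> (r <= w)%O).
Proof.
elim: s => [|a s IH] /=.
  by split; [left|split=> //].
case: IH => [[hr|[q hq hrq]] [hv hw]]; case ha: (rcv a) => [w|].
- rewrite minEle; case: ifP => hwr.
  + split; first by right; exists a; rewrite ?mem_head.
    split; first exact: le_trans hwr hv.
    move=> q w' /[1!inE] /orP [/eqP ->|hq]; first by rewrite ha => -[<-].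
    by move=> /(hw _ _ hq); apply: le_trans.
  + have hrw : (foldr (fun q acc => if rcv q is Some w then Order.min w acc else acc) v s <= w)%O.
      by move: (le_total w (foldr (fun q acc => if rcv q is Some w then Order.min w acc else acc) v s)); rewrite hwr.
    split; first by left.
    split=> // q w' /[1!inE] /orP [/eqP ->|hq]; first by rewrite ha => -[<-].
    exact: hw.
- split; first by left.
  split=> // q w' /[1!inE] /orP [/eqP ->|hq]; first by rewrite ha.
  exact: hw.
- rewrite minEle; case: ifP => hwr.
  + split; first by right; exists a; rewrite ?mem_head.
    split; first exact: le_trans hwr hv.
    move=> q' w' /[1!inE] /orP [/eqP ->|hq']; first by rewrite ha => -[<-].
    by move=> /(hw _ _ hq'); apply: le_trans.
  + have hrw : (foldr (fun q acc => if rcv q is Some w then Order.min w acc else acc) v s <= w)%O.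
      by move: (le_total w (foldr (fun q acc => if rcv q is Some w then Order.min w acc else acc) v s)); rewrite hwr.
    split; first by right; exists q; rewrite // inE hq orbT.
    split=> // q' w' /[1!inE] /orP [/eqP ->|hq']; first by rewrite ha => -[<-].
    exact: hw.
- split; first by right; exists q; rewrite // inE hq orbT.
  split=> // q' w' /[1!inE] /orP [/eqP ->|hq']; first by rewrite ha.
  exact: hw.
Qed.

Theorem mainTheorem3 (n : nat) (d : Order.disp_t) (V : orderType d)
  (S : {set graph n}) :
  S != set0 ->
  (forall G, G \in S -> is_graph G) ->
  set_agreement_solvable_one_round V (eqdom S) (closed_above_model (SymG S)).
Proof.
move=> _ hS.
exists V, (fun _ v => v), (fun p v rcv => decf v rcv).
move=> gs hgs x.
set rcv := fun p q => if q \in In (gs 0) p then Some (x q) else None.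
have hD : forall p, one_round_decision (fun _ v => v)
   (fun p v rcv => decf v rcv) (gs 0) x p = decf (x p) (rcv p) by [].
have hval : forall p, exists2 c, one_round_decision (fun _ v => v)
   (fun p v rcv => decf v rcv) (gs 0) x p = x c &
   (forall q, q \in In (gs 0) p -> (x c <= x q)%O) /\ (x c <= x p)%O.
  move=> p; rewrite hD /decf.
  have [[hr|[q _ hq]] [hv hw]] := fold_spec (x p) (rcv p) (enum 'I_n).
  - exists p => //; rewrite -hr; split=> // q hq.
    by apply: (hw q); rewrite ?mem_enum // /rcv hq.
  - move: hq hv hw; rewrite /rcv; case: ifP => // _ [<-] hv hw.
    exists q => //; split=> // q' hq'.
    by apply: (hw q'); rewrite ?mem_enum // /rcv hq'.
split.
  by move=> p; have [c -> _] := hval p; exists c.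
have [G' hG' hsub] := hgs 0.
case/imset2P: hG' => s G _ hGS hG'.
have [hmn hdom] := eqdomG_spec (hS G hGS).
set m := eqdomG G in hmn hdom.
have hmk : m <= eqdom S := @leq_bigmax_cond _ (fun G => G \in S) (@eqdomG n) G hGS.
pose R := fun p q => (x p <= x q)%O.
set srt := sort R (enum 'I_n).
set L := take m srt.
have huL : uniq L by rewrite take_uniq // sort_uniq enum_uniq.
have hsL : size L = m by rewrite size_takel // size_sort size_enum_ord.
have f1 : forall p, exists2 q, q \in L & (q, p) \in gs 0.
  move=> p.
  pose Q := [set q in L].
  have hQ : #|Q| = m by rewrite cardsE; move/card_uniqP: huL ->.
  pose P0 := (s^-1)%g @: Q.
  have hP0 : #|P0| = m by rewrite card_imset //; apply: perm_inj.
  have := in_setT ((s^-1)%g p); rewrite -(hdom _ hP0) inE.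
  case/existsP => q' /andP [/imsetP [q hq ->] hq'].
  exists q; first by move: hq; rewrite inE.
  apply: (subsetP hsub); rewrite hG'; apply/imsetP.
  by exists ((s^-1)%g q, (s^-1)%g p) => //=; rewrite !permKV.
have f2 : forall q r, q \in L -> r \notin L -> (x q <= x r)%O.
  move=> q r hq hr.
  have hpw : pairwise R srt.
    rewrite -sorted_pairwise; first by apply: sort_sorted => a b; apply: le_total.
    by move=> a b c; apply: le_trans.
  have hrs : r \in drop m srt.
    have : r \in srt by rewrite mem_sort mem_enum.
    by rewrite -{1}(cat_take_drop m srt) mem_cat (negbTE hr).
  move: hpw; rewrite -(cat_take_drop m srt) pairwise_cat => /and3P [hall _ _].
  by move/allrelP: hall => /(_ q r hq hrs).
have f3 : forall p, one_round_decision (fun _ v => v)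
   (fun p v rcv => decf v rcv) (gs 0) x p \in map x L.
  move=> p; have [c -> [hc hcp]] := hval p.
  have [q0 hq0 hq0p] := f1 p.
  have hle : (x c <= x q0)%O by apply: hc; rewrite inE.
  case hcL: (c \in L); first exact: map_f.
  have : (x q0 <= x c)%O by apply: f2; rewrite ?hcL.
  by move=> h; rewrite (@le_anti _ _ (x c) (x q0)) ?hle ?h // map_f.
apply: leq_trans hmk; rewrite -hsL -(size_map x).
apply: uniq_leq_size; first exact: undup_uniq.
by move=> v; rewrite mem_undup => /mapP [p _ ->]; apply: f3.
Qed.
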